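(* Let $\Sigma=\{a,b,e\}$ and let $L_1$ be the language of words $w\in\Sigma^*$ such that the word obtained from $w$ by deleting all occurrences of $e$ belongs to $b^+a$. Assuming the prefix-$U_1$ hypothesis, $L_1$ is not tractable.
   Context: For $w=a_1\cdots a_n$, an $L$-infix is a pair $[i,j]$ with $1\le i\le j\le n$ and $a_i\cdots a_j\in L$. $L$ is tractable if there is a data structure, built on an input word $w$, supporting letter substitution updates (replace the $i$-th letter by a given letter) and enumeration queries (output every $L$-infix of the current word exactly once, any order), and a constant $B$ depending only on $L$ such that for every $w$: each update takes at most $B$ steps; during an enumeration query the next $L$-infix (or the conclusion that none remain) is produced within $B$ steps; an enumeration query uses at most $B$ additional memory cells and treats previously existing memory as read-only; building takes at most $B|w|$ steps and memory never exceeds $B|w|$ cells. Model: unit-cost RAM with cell size logarithmic in $|w|$. The prefix-$U_1$ problem asks, for $n\in\mathbb{N}$, for a data structure maintaining a set $S\subseteq\{1,\dots,n\}$ supporting, on input $i\le n$: (1) test whether $i\in S$; (2) insert $i$ into $S$; (3) remove $i$ from $S$; (4) return yes iff $i\le\min S$. The prefix-$U_1$ hypothesis states that no data structure performs all these operations in time independent of $n$ in the unit-cost RAM model with logarithmic cell size. *)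

(* Defs.v *)
From mathcomp Require Import all_boot.
Set Implicit Arguments. Unset Strict Implicit. Unset Printing Implicit Defensive.

Inductive letter := La | Lb | Le.

Definition code (x : letter) : nat :=
  match x with La => 1 | Lb => 2 | Le => 3 end.

Definition not_e (x : letter) : bool := if x is Le then false else true.

Definition L1 (w : seq letter) : Prop :=
  exists k, 0 < k /\ filter not_e w = rcons (nseq k Lb) La.

(* the infix a_i ... a_j (positions 1-based) *)
Definition infix (w : seq letter) (i j : nat) : seq letter :=
  take (j - i + 1) (drop (i - 1) w).

(* Unit-cost RAM with logarithmic cell size                            *)
(* Constant-index registers R (reset to 0 at the start of every        *)
(* operation) and an indirectly addressed global memory G that          *)
(* persists between operations.                                         *)
Inductive instr :=
| IConst of nat & nat
| IArg   of nat & nat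
| IAdd   of nat & nat & nat
| ISub   of nat & nat & nat    (* R[r] := R[s] - R[t] (truncated)    *)
| IMul   of nat & nat & nat
| IDiv   of nat & nat & nat    (* R[r] := R[s] / R[t] (0 if R[t]=0)  *)
| ILoad  of nat & nat
| IStore of nat & nat
| IRead  of nat & nat
| IJz    of nat & nat
| IJmp   of nat
| IOut   of nat & nat
| IHalt.

Definition program := seq instr.

Record env := Env {
  e_args  : seq nat;
  e_input : option (seq nat);   (* read-only input word (letter codes) *)
  e_store : bool;
  e_out   : bool;
  e_W     : nat;                (* all cell values must be < e_W        *)
  e_M     : nat                 (* all global addresses must be < e_M   *)
}.

Record config := Cfg { pc : nat; regs : nat -> nat; glob : nat -> nat }.

Definition upd (f : nat -> nat) (r v : nat) : nat -> nat :=
  fun x => if x == r then v else f x.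

Inductive sres :=
| Stuck
| Halted of config
| Next of config & option (nat * nat).

Definition step (E : env) (p : program) (c : config) : sres :=
  let R := regs c in let G := glob c in let pc' := (pc c).+1 in
  let setr r v := if v < e_W E then Next (Cfg pc' (upd R r v) G) None else Stuck in
  if pc c < size p then
    match nth IHalt p (pc c) with
    | IConst r k => setr r k
    | IArg r k => setr r (nth 0 (e_args E) k)
    | IAdd r s t => setr r (R s + R t)
    | ISub r s t => setr r (R s - R t)
    | IMul r s t => setr r (R s * R t)
    | IDiv r s t => setr r (if R t == 0 then 0 else R s %/ R t)
    | ILoad r s => if R s < e_M E then setr r (G (R s)) else Stuck
    | IStore r s =>
        if e_store E && (R r < e_M E) then Next (Cfg pc' R (upd G (R r) (R s))) None
        else Stuck
    | IRead r s =>
        match e_input E with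
        | None => Stuck
        | Some w => let j := R s in
                    setr r (if (0 < j) && (j <= size w) then nth 0 w j.-1 else 0)
        end
    | IJz r l => Next (Cfg (if R r == 0 then l else pc') R G) None
    | IJmp l => Next (Cfg l R G) None
    | IOut r s => if e_out E then Next (Cfg pc' R G) (Some (R r, R s)) else Stuck
    | IHalt => Halted c
    end
  else Halted c.

Definition start (g : nat -> nat) : config := Cfg 0 (fun _ => 0) g.
Definition zero_mem : nat -> nat := fun _ => 0.

(* run p for at most [fuel] steps (the final halting step included);  *)
Fixpoint run (E : env) (p : program) (fuel : nat) (c : config) : option config :=
  match fuel with
  | 0 => None
  | f.+1 =>
    match step E p c with
    | Stuck => None
    | Halted c' => Some c'
    | Next c' _ => run E p f c'
    end
  end.

Definition halts (E : env) (p : program) (c c' : config) : Prop :=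
  exists fuel, run E p fuel c = Some c'.

(* one delay segment: within d steps either halt (Some None) or produce *)
(* an output (Some (Some (o, c'))).                                     *)
Fixpoint seg (E : env) (p : program) (d : nat) (c : config)
  : option (option ((nat * nat) * config)) :=
  match d with
  | 0 => None
  | d'.+1 =>
    match step E p c with
    | Stuck => None
    | Halted _ => Some None
    | Next c' None => seg E p d' c'
    | Next c' (Some o) => Some (Some (o, c'))
    end
  end.

(* enumeration with delay at most B between consecutive outputs, before *)
(* the first one, and between the last one and termination; k bounds    *)
(* the number of segments.                                              *)
Fixpoint enum (E : env) (p : program) (B k : nat) (c : config)
  : option (seq (nat * nat)) :=
  match k with
  | 0 => None
  | k'.+1 =>
    match seg E p B c with
    | None => None
    | Some None => Some [::]
    | Some (Some (o, c')) => omap (cons o) (enum E p B k' c')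
    end
  end.

Section Tractable.
Variables (L : seq letter -> Prop) (upd_p enm_p : program) (B c : nat).

(* word size: values < (n+2)^c, i.e. O(log n)-bit cells;               *)
Definition cellW (n : nat) : nat := (n + 2) ^ c.
Definition memM (n : nat) : nat := B * (n + 1).

Definition enum_env (n : nat) : env := Env [:: n] None false true (cellW n) (memM n).
Definition upd_env (n i : nat) (x : letter) : env :=
  Env [:: n; i; code x] None true false (cellW n) (memM n).

Definition enum_correct (w : seq letter) (g : nat -> nat) : Prop :=
  exists k outs,
    enum (enum_env (size w)) enm_p B k (start g) = Some outs /\
    uniq outs /\
    forall i j, (i, j) \in outs <->
      (1 <= i /\ i <= j /\ j <= size w /\ L (infix w i j)).

Fixpoint trace_ok (w : seq letter) (g : nat -> nat) (us : seq (nat * letter)) : Prop :=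
  enum_correct w g /\
  match us with
  | [::] => True
  | (i, x) :: us' =>
      exists cf, run (upd_env (size w) i x) upd_p B (start g) = Some cf /\
                 trace_ok (set_nth La w i.-1 x) (glob cf) us'
  end.
End Tractable.

Definition pre_env (B c : nat) (w : seq letter) : env :=
  Env [:: size w] (Some (map code w)) true false (cellW c (size w)) (memM B (size w)).

Definition tractable (L : seq letter -> Prop) : Prop :=
  exists (pre_p upd_p enm_p : program) (B c : nat),
    forall w : seq letter,
      exists cf0,
        run (pre_env B c w) pre_p (B * (size w + 1)) (start zero_mem) = Some cf0 /\
        forall us : seq (nat * letter),
          all (fun u => (0 < u.1) && (u.1 <= size w)) us ->
          trace_ok L upd_p enm_p B c w (glob cf0) us.

Inductive u1op := U1Mem of nat | U1Ins of nat | U1Rem of nat | U1Pre of nat.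

Definition u1arg (o : u1op) : nat :=
  match o with U1Mem i | U1Ins i | U1Rem i | U1Pre i => i end.

Record u1ds := U1DS {
  u1_init : program; u1_mem : program; u1_ins : program;
  u1_rem : program; u1_pre : program }.

Definition u1prog (D : u1ds) (o : u1op) : program :=
  match o with
  | U1Mem _ => u1_mem D | U1Ins _ => u1_ins D
  | U1Rem _ => u1_rem D | U1Pre _ => u1_pre D
  end.

Definition u1env (c n i : nat) : env :=
  Env [:: n; i] None true false ((n + 2) ^ c) ((n + 2) ^ c).

Definition answer (cf : config) : bool := regs cf 0 != 0.

(* S is represented by its characteristic function; "i <= min S" means *)
(* every element of S is >= i (true when S is empty).                  *)
Fixpoint u1_trace (D : u1ds) (c B n : nat) (S : nat -> bool) (g : nat -> nat)
    (ops : seq u1op) : Prop :=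
  match ops with
  | [::] => True
  | o :: ops' =>
      exists cf, run (u1env c n (u1arg o)) (u1prog D o) B (start g) = Some cf /\
      match o with
      | U1Mem i => answer cf = S i /\ u1_trace D c B n S (glob cf) ops'
      | U1Ins i => u1_trace D c B n (fun x => (x == i) || S x) (glob cf) ops'
      | U1Rem i => u1_trace D c B n (fun x => (x != i) && S x) (glob cf) ops'
      | U1Pre i => (answer cf <-> forall x, 1 <= x <= n -> S x -> i <= x) /\
                   u1_trace D c B n S (glob cf) ops'
      end
  end.

Definition u1_solves (D : u1ds) (c B : nat) : Prop :=
  forall n, exists cf0,
    halts (u1env c n 0) (u1_init D) (start zero_mem) cf0 /\
    forall ops : seq u1op,
      all (fun o => (1 <= u1arg o) && (u1arg o <= n)) ops ->
      u1_trace D c B n (fun _ => false) (glob cf0) ops.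

Definition prefixU1_hypothesis : Prop :=
  ~ exists (D : u1ds) (c B : nat), u1_solves D c B.

(* Main.v *)
From HB Require Import structures.
Require Import Defs.
From mathcomp Require Import all_boot zify.
Set Implicit Arguments. Unset Strict Implicit. Unset Printing Implicit Defensive.

Definition eql (x y : letter) := code x == code y.
Lemma eqlP : Equality.axiom eql.
Proof. by case; case; constructor. Qed.
HB.instance Definition _ := hasDecEq.Build letter eqlP.

Lemma filter_noA (s : seq letter) : La \notin s -> filter not_e s = nseq (count_mem Lb s) Lb.
Proof.
elim: s => //= x s IH; rewrite in_cons negb_or => /andP[hx hs].
by case: x hx => //= _; rewrite IH.
Qed.

Lemma L1_infix_iff (w : seq letter) ia :
  ia < size w -> nth Le w ia = La ->
  (forall j, j < size w -> nth Le w j = La -> j = ia) ->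
  (exists p q, [/\ 1 <= p, p <= q, q <= size w & L1 (Defs.infix w p q)]) <->
  (exists j, j < ia /\ nth Le w j = Lb).
Proof.
move=> hia hA huniq; split.
- case=> p [q [h1 h2 h3 [k [hk hf]]]].
  set s := Defs.infix w p q in hf.
  have hsz : size s = q - p + 1 by rewrite /s /Defs.infix size_take_min size_drop; lia.
  have hnth : forall u, u < size s -> nth Le s u = nth Le w (p - 1 + u).
    by move=> u hu; rewrite /s /Defs.infix nth_take ?nth_drop //; lia.
  clearbody s.
  have : La \in filter not_e s by rewrite hf mem_rcons mem_head.
  rewrite mem_filter => /andP[_ /(nthP Le)[t ht hst]].
  have ht' : p - 1 + t = ia.
    apply: huniq; last by rewrite -hnth.
    rewrite hsz in ht; lia.
  have hs : s = take t s ++ nth Le s t :: drop t.+1 s by rewrite -drop_nth // cat_take_drop.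
  have hnA : La \notin filter not_e (take t s).
    rewrite mem_filter; apply/negP => /andP[_ /(nthP Le)[u hu hsu]].
    rewrite size_take_min in hu.
    have hu' : u < t by lia.
    have hus : u < size s by exact: ltn_trans hu' ht.
    rewrite nth_take // hnth // in hsu.
    have : p - 1 + u = ia by apply: huniq => //; rewrite hsz in ht; lia.
    lia.
  move: hf; rewrite hs filter_cat hst /= => hf.
  have := congr1 (index La) hf.
  rewrite index_cat (negbTE hnA) /= -cats1 index_cat mem_nseq andbF /= size_nseq addn0 => hk2.
  have : 0 < size (filter not_e (take t s)) by rewrite hk2 addn0.
  case E: (filter not_e (take t s)) => [|y ys] // _.
  have : y \in filter not_e (take t s) by rewrite E mem_head.
  rewrite mem_filter => /andP[hy /(nthP Le)[u hu hsu]].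
  have hyA : y != La by apply: contraNneq hnA => <-; rewrite E mem_head.
  rewrite size_take_min leq_min in hu; case/andP: hu => hut _.
  have hus : u < size s by exact: ltn_trans hut ht.
  rewrite nth_take // hnth // in hsu.
  exists (p - 1 + u); split; first lia.
  by rewrite hsu; case: y hy hyA {E hsu}.
- case=> j [hj hjb].
  exists j.+1, ia.+1; split; try lia.
  exists (count_mem Lb (take (ia - j) (drop j w))).
  have -> : Defs.infix w j.+1 ia.+1 = take (ia - j).+1 (drop j w) by rewrite /Defs.infix subSS addn1 subn1.
  rewrite (take_nth Le) ?size_drop; last lia.
  rewrite nth_drop subnKC ?hA; last lia.
  rewrite filter_rcons /= filter_noA; last first.
    apply/negP => /(nthP Le)[u hu hsu].
    rewrite size_take_min size_drop in hu.
    have hu' : u < ia - j by lia.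
    rewrite nth_take // nth_drop in hsu.
    have : j + u = ia by apply: huniq => //; lia.
    lia.
  have hpos : 0 < size (take (ia - j) (drop j w)) by rewrite size_take_min size_drop; lia.
  split=> //; rewrite -has_count has_pred1.
  have <- : nth Le (take (ia - j) (drop j w)) 0 = Lb by rewrite nth_take ?nth_drop ?addn0 //; lia.
  exact: mem_nth.
Qed.

Definition wS n (S : nat -> bool) : seq letter :=
  mkseq (fun k => if odd k && S (k./2).+1 then Lb else Le) (2 * n).
Definition wA n (S : nat -> bool) i : seq letter :=
  mkseq (fun k => if k == (2 * i - 2) then La else if odd k && S (k./2).+1 then Lb else Le) (2 * n).

Lemma halfE k i : 0 < i -> (k == (2*i).-1) = (odd k && ((k./2).+1 == i)).
Proof.
move=> hi; rewrite -[k in LHS](odd_double_half k).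
by case: (odd k) => /=; rewrite -muln2; apply/eqP/eqP; lia.
Qed.

Lemma odd2m2 i : odd (2 * i - 2) = false.
Proof. have -> : 2 * i - 2 = 2 * (i - 1) by lia. by rewrite mul2n odd_double. Qed.

Lemma size_wS n S : size (wS n S) = 2 * n.
Proof. exact: size_mkseq. Qed.

Lemma wS_set n S i x : 0 < i <= n ->
  set_nth La (wS n S) (2 * i).-1 (if x then Lb else Le) =
  wS n (fun y => if y == i then x else S y).
Proof.
move=> /andP[h1 h2]; apply: (@eq_from_nth _ La).
  by rewrite size_set_nth !size_wS; apply/maxn_idPr; lia.
rewrite size_set_nth size_wS => k hk.
have hk' : k < 2 * n by move: hk; rewrite (maxn_idPr _) //; lia.
rewrite nth_set_nth /= !nth_mkseq // halfE //.
case: (odd k) => //=; case: eqP => // ->; by case: x.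
Qed.

Lemma wS_a n S i : 0 < i <= n -> set_nth La (wS n S) (2 * i - 1).-1 La = wA n S i.
Proof.
move=> /andP[h1 h2]; apply: (@eq_from_nth _ La).
  by rewrite size_set_nth size_wS size_mkseq; apply/maxn_idPr; lia.
rewrite size_set_nth size_wS => k hk.
have hk' : k < 2 * n by move: hk; rewrite (maxn_idPr _) //; lia.
rewrite nth_set_nth /= !nth_mkseq //.
have -> : (2 * i - 1).-1 = 2 * i - 2 by lia.
by case: eqP.
Qed.

Lemma wA_e n S i : 0 < i <= n -> set_nth La (wA n S i) (2 * i - 1).-1 Le = wS n S.
Proof.
move=> /andP[h1 h2]; apply: (@eq_from_nth _ La).
  by rewrite size_set_nth size_wS size_mkseq; apply/maxn_idPr; lia.
rewrite size_set_nth size_mkseq => k hk.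
have hk' : k < 2 * n by move: hk; rewrite (maxn_idPr _) //; lia.
rewrite nth_set_nth /= !nth_mkseq //.
have -> : (2 * i - 1).-1 = 2 * i - 2 by lia.
by case: eqP => // ->; rewrite odd2m2.
Qed.

Lemma wS0 n : wS n (fun _ => false) = nseq (2 * n) Le.
Proof.
apply: (@eq_from_nth _ Le); first by rewrite size_wS size_nseq.
by rewrite size_wS => k hk; rewrite nth_mkseq // nth_nseq hk andbF.
Qed.

Lemma wA_iff n S i : 0 < i <= n ->
  (exists p q, [/\ 1 <= p, p <= q, q <= size (wA n S i) & L1 (Defs.infix (wA n S i) p q)]) <->
  (exists x, [/\ 0 < x, x < i & S x]).
Proof.
move=> /andP[h1 h2].
have hsz : size (wA n S i) = 2 * n by rewrite size_mkseq.
rewrite (@L1_infix_iff _ (2 * i - 2)).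
- split.
  + case=> j [hj]; rewrite nth_mkseq; last lia.
    case: eqP => [?|_]; first lia.
    case E: (odd j && S (j./2).+1) => // _.
    move/andP: E => [ho hS]; exists (j./2).+1; split => //.
    move: (odd_double_half j) hj; rewrite ho -muln2; lia.
  + case=> x [hx0 hxi hx]; exists (2 * x).-1; split; first lia.
    rewrite nth_mkseq; last lia.
    case: eqP => [?|_]; first lia.
    have := halfE (2 * x).-1 hx0; rewrite eqxx => /esym/andP[-> /eqP ->].
    by rewrite hx.
- by rewrite hsz; lia.
- by rewrite nth_mkseq ?eqxx //; lia.
- rewrite hsz => j hj; rewrite nth_mkseq //.
  case: eqP => // _; by case: (_ && _).
Qed.

Fixpoint steps (E : env) (P : program) (k : nat) (c : config) : option config :=
  match k with
  | 0 => Some c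
  | k'.+1 => match step E P c with Next c' _ => steps E P k' c' | _ => None end
  end.

Definition reach E P k c (Q : config -> Prop) :=
  exists j c', [/\ j <= k, steps E P j c = Some c' & Q c'].

Lemma reach0 E P k c (Q : config -> Prop) : Q c -> reach E P k c Q.
Proof. by move=> h; exists 0, c. Qed.

Lemma reach_mono E P k k' c Q : k <= k' -> reach E P k c Q -> reach E P k' c Q.
Proof. move=> hk [j [c' [h1 h2 h3]]]; exists j, c'; split=> //; lia. Qed.

Lemma reach_weak E P k c (Q Q' : config -> Prop) :
  (forall c, Q c -> Q' c) -> reach E P k c Q -> reach E P k c Q'.
Proof. move=> hQ [j [c' [h1 h2 h3]]]; exists j, c'; split=> //; exact: hQ. Qed.

Lemma steps_add E P j1 j2 c :
  steps E P (j1 + j2) c = obind (steps E P j2) (steps E P j1 c).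
Proof.
elim: j1 c => [|j1 IH] c //=.
by case: (step E P c) => // c' _; exact: IH.
Qed.

Lemma reach_trans E P k1 k2 c Q :
  reach E P k1 c (fun c' => reach E P k2 c' Q) -> reach E P (k1 + k2) c Q.
Proof.
move=> [j1 [c1 [h1 h2 [j2 [c2 [h3 h4 h5]]]]]].
exists (j1 + j2), c2; split=> //; first lia.
by rewrite steps_add h2.
Qed.

Lemma reach_step E P k c c1 o Q :
  step E P c = Next c1 o -> reach E P k c1 Q -> reach E P k.+1 c Q.
Proof.
move=> hs [j [c' [h1 h2 h3]]]; exists j.+1, c'; split=> //=.
by rewrite hs.
Qed.

Lemma fetch_lt P q i : nth IHalt P q = i -> i <> IHalt -> q < size P.
Proof.
move=> h hi; rewrite ltnNge; apply/negP => hq; apply: hi.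
by rewrite -h nth_default.
Qed.

Section Instr.
Variables (E : env) (P : program) (k : nat) (c : config) (Q : config -> Prop).
Let R := regs c.
Let G := glob c.

Lemma rs_const r v : nth IHalt P (pc c) = IConst r v -> v < e_W E ->
  reach E P k (Cfg (pc c).+1 (upd R r v) G) Q -> reach E P k.+1 c Q.
Proof. move=> h hv; apply: (@reach_step _ _ _ _ _ None); by rewrite /step (fetch_lt h) // h /= hv. Qed.

Lemma rs_arg r j : nth IHalt P (pc c) = IArg r j -> nth 0 (e_args E) j < e_W E ->
  reach E P k (Cfg (pc c).+1 (upd R r (nth 0 (e_args E) j)) G) Q -> reach E P k.+1 c Q.
Proof. move=> h hv; apply: (@reach_step _ _ _ _ _ None); by rewrite /step (fetch_lt h) // h /= hv. Qed.

Lemma rs_add r s t : nth IHalt P (pc c) = IAdd r s t -> R s + R t < e_W E ->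
  reach E P k (Cfg (pc c).+1 (upd R r (R s + R t)) G) Q -> reach E P k.+1 c Q.
Proof. move=> h hv; apply: (@reach_step _ _ _ _ _ None); by rewrite /step (fetch_lt h) // h /= hv. Qed.

Lemma rs_sub r s t : nth IHalt P (pc c) = ISub r s t -> R s - R t < e_W E ->
  reach E P k (Cfg (pc c).+1 (upd R r (R s - R t)) G) Q -> reach E P k.+1 c Q.
Proof. move=> h hv; apply: (@reach_step _ _ _ _ _ None); by rewrite /step (fetch_lt h) // h /= hv. Qed.

Lemma rs_mul r s t : nth IHalt P (pc c) = IMul r s t -> R s * R t < e_W E ->
  reach E P k (Cfg (pc c).+1 (upd R r (R s * R t)) G) Q -> reach E P k.+1 c Q.
Proof. move=> h hv; apply: (@reach_step _ _ _ _ _ None); by rewrite /step (fetch_lt h) // h /= hv. Qed.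

Lemma rs_div r s t : nth IHalt P (pc c) = IDiv r s t ->
  (if R t == 0 then 0 else R s %/ R t) < e_W E ->
  reach E P k (Cfg (pc c).+1 (upd R r (if R t == 0 then 0 else R s %/ R t)) G) Q ->
  reach E P k.+1 c Q.
Proof. move=> h hv; apply: (@reach_step _ _ _ _ _ None); by rewrite /step (fetch_lt h) // h /= hv. Qed.

Lemma rs_load r s : nth IHalt P (pc c) = ILoad r s -> R s < e_M E -> G (R s) < e_W E ->
  reach E P k (Cfg (pc c).+1 (upd R r (G (R s))) G) Q -> reach E P k.+1 c Q.
Proof. move=> h hm hv; apply: (@reach_step _ _ _ _ _ None); by rewrite /step (fetch_lt h) // h /= hm hv. Qed.

Lemma rs_store r s : nth IHalt P (pc c) = IStore r s -> e_store E -> R r < e_M E ->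
  reach E P k (Cfg (pc c).+1 R (upd G (R r) (R s))) Q -> reach E P k.+1 c Q.
Proof. move=> h hs hm; apply: (@reach_step _ _ _ _ _ None); by rewrite /step (fetch_lt h) // h /= hs hm. Qed.

Lemma rs_jz r l : nth IHalt P (pc c) = IJz r l ->
  reach E P k (Cfg (if R r == 0 then l else (pc c).+1) R G) Q -> reach E P k.+1 c Q.
Proof. move=> h; apply: (@reach_step _ _ _ _ _ None); by rewrite /step (fetch_lt h) // h /=. Qed.

Lemma rs_jmp l : nth IHalt P (pc c) = IJmp l ->
  reach E P k (Cfg l R G) Q -> reach E P k.+1 c Q.
Proof. move=> h; apply: (@reach_step _ _ _ _ _ None); by rewrite /step (fetch_lt h) // h /=. Qed.
End Instr.

Lemma run_of_steps E P j c c' f :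
  steps E P j c = Some c' -> nth IHalt P (pc c') = IHalt -> j < f -> run E P f c = Some c'.
Proof.
elim: j f c => [|j IH] [|f] c //=.
- move=> [<-] h _; rewrite /step; case: ifP => _ //; by rewrite h.
- case E1: (step E P c) => [|c1|c1 o] //.
  move=> hs hh hj; exact: IH.
Qed.

Definition code_at (P : program) (a : nat) (s : seq instr) :=
  forall j, j < size s -> nth IHalt P (a + j) = nth IHalt s j.

Lemma code_at_catl P a s1 s2 : code_at P a (s1 ++ s2) -> code_at P a s1.
Proof. move=> h j hj; rewrite h ?nth_cat ?hj // size_cat; lia. Qed.

Lemma code_at_catr P a s1 s2 : code_at P a (s1 ++ s2) -> code_at P (a + size s1) s2.
Proof.
move=> h j hj; rewrite -addnA h ?nth_cat ?size_cat; last lia.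
by rewrite ltnNge leq_addr /= addKn.
Qed.

Lemma code_at_self P : code_at P 0 P.
Proof. by []. Qed.

Lemma code_fetch P a s c t : code_at P a s -> t < size s -> pc c = a + t ->
  nth IHalt P (pc c) = nth IHalt s t.
Proof. by move=> h ht ->; apply: h. Qed.

Definition zcode (R : nat) : seq instr := mkseq (fun r => IConst r 0) R.

Lemma zero_run E P a R c : code_at P a (zcode R) -> pc c = a -> 0 < e_W E ->
  reach E P R c (fun c' => [/\ pc c' = a + R, (forall r, r < R -> regs c' r = 0),
     (forall r, R <= r -> regs c' r = regs c r) & glob c' = glob c]).
Proof.
move=> hc hpc hW.
suff : forall j, j <= R -> reach E P j c (fun c' => [/\ pc c' = a + j,
     (forall r, r < j -> regs c' r = 0),
     (forall r, j <= r -> regs c' r = regs c r) & glob c' = glob c]).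
  by move/(_ R (leqnn R)).
elim=> [_|j IH hj].
  by apply: reach0; split=> //; rewrite addn0.
rewrite -addn1; apply: reach_trans; apply: reach_weak (IH (ltnW hj)).
move=> c' [h1 h2 h3 h4].
apply: (@rs_const _ _ _ _ _ j 0).
- rewrite (code_fetch hc (t := j)) ?size_mkseq ?nth_mkseq //.
- done.
apply: reach0; split=> /=.
- rewrite h1; lia.
- move=> r hr; rewrite /upd; case: eqP => // hne; apply: h2; lia.
- move=> r hr; rewrite /upd; case: eqP => [?|_]; [lia | apply: h3; lia].
- done.
Qed.

Definition LL := 8.

Definition cinstr (R off sz F k : nat) (ins : instr) : seq instr :=
  let b := off + LL * k in
  let nxt := off + LL * k.+1 in
  let tg l := off + LL * minn l sz in
  match ins with
  | IConst r v => [:: IConst r v; IJmp nxt]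
  | IArg r j => if j < 3 then [:: IConst r 0; IAdd r (R + j) r; IJmp nxt]
                else [:: IConst r 0; IJmp nxt]
  | IAdd r s t => [:: IAdd r s t; IJmp nxt]
  | ISub r s t => [:: ISub r s t; IJmp nxt]
  | IMul r s t => [:: IMul r s t; IJmp nxt]
  | IDiv r s t => [:: IDiv r s t; IJmp nxt]
  | ILoad r s => [:: ILoad r s; IJmp nxt]
  | IStore r s => [:: IStore r s; IJmp nxt]
  | IRead r s => [:: IJz s (b + 4); ISub (R + 3) s R; IJz (R + 3) (b + 6); IJmp (b + 4);
                     IConst r 0; IJmp nxt; IConst r 3; IJmp nxt]
  | IJz r l => [:: IJz r (tg l); IJmp nxt]
  | IJmp l => [:: IJmp (tg l)]
  | IOut _ _ => [:: IJmp F]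
  | IHalt => [:: IJmp (off + LL * sz)]
  end.

Definition cpad R off sz F k ins :=
  let s := cinstr R off sz F k ins in s ++ nseq (LL - size s) IHalt.

Definition ccode R off F (p : program) : seq instr :=
  flatten [seq cpad R off (size p) F k (nth IHalt p k) | k <- iota 0 (size p)].

Lemma size_cinstr R off sz F k ins : size (cinstr R off sz F k ins) <= LL.
Proof. by case: ins => //= r j; case: ifP. Qed.

Lemma size_cpad R off sz F k ins : size (cpad R off sz F k ins) = LL.
Proof. rewrite /cpad size_cat size_nseq; have := size_cinstr R off sz F k ins; lia. Qed.

Lemma size_ccode R off F p : size (ccode R off F p) = LL * size p.
Proof.
rewrite /ccode size_flatten /shape -map_comp.
have -> : [seq (size \o (fun k => cpad R off (size p) F k (nth IHalt p k))) i | i <- iota 0 (size p)]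
   = nseq (size p) LL.
  apply: (@eq_from_nth _ 0); first by rewrite size_map size_iota size_nseq.
  by move=> i; rewrite size_map size_iota => hi; rewrite (nth_map 0) ?size_iota //= size_cpad nth_nseq hi.
elim: (size p) => //= n IH; rewrite IH; lia.
Qed.

Lemma nth_flatten_unif (f : nat -> seq instr) a n k j :
  (forall x, size (f x) = LL) -> k < n -> j < LL ->
  nth IHalt (flatten [seq f x | x <- iota a n]) (LL * k + j) = nth IHalt (f (a + k)) j.
Proof.
move=> hf; elim: n a k => [|n IH] a k //= hk hj.
rewrite nth_cat hf; case: k hk => [|k] hk.
  by rewrite muln0 add0n hj addn0.
have -> : (LL * k.+1 + j < LL) = false by rewrite /LL; lia.
have -> : LL * k.+1 + j - LL = LL * k + j by rewrite /LL; lia.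
by rewrite IH // addSnnS.
Qed.

Lemma ccode_at P off R F p k : code_at P off (ccode R off F p) -> k < size p ->
  code_at P (off + LL * k) (cinstr R off (size p) F k (nth IHalt p k)).
Proof.
move=> hc hk j hj.
have hjL : j < LL by have := size_cinstr R off (size p) F k (nth IHalt p k); lia.
rewrite -addnA hc; last by rewrite size_ccode; move: hjL; rewrite /LL; lia.
rewrite /ccode nth_flatten_unif //; last by move=> x; exact: size_cpad.
by rewrite /cpad nth_cat hj.
Qed.

Definition ireg (i : instr) : nat :=
  match i with
  | IConst r _ | IArg r _ | IJz r _ => r
  | IAdd r s t | ISub r s t | IMul r s t | IDiv r s t => maxn r (maxn s t)
  | ILoad r s | IStore r s | IRead r s | IOut r s => maxn r s
  | IJmp _ | IHalt => 0
  end.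

Lemma updE1 f r v : upd f r v r = v.
Proof. by rewrite /upd eqxx. Qed.

Ltac finr hk hr ha hb :=
  apply: reach0; split;
  [ by rewrite /= (minn_idPl hk)
  | move=> r' hr' /=; unfold upd; repeat (case: eqP => // ?); try lia; by apply: hr
  | move=> j' hj' /=; unfold upd; repeat (case: eqP => // ?); try lia; by apply: ha
  | move=> r' /=; unfold upd; repeat (case: eqP => // ?); by apply: hb
  | done ].

Ltac stepcase p c := case: ifP => _ //; case: (nth IHalt p (pc c)) => [r v|r j|r s t|r s t|r s t|r s t|r s|r s|r s|r l|l|r s|] /=;
  try (case: (e_input _) => [w|] //=); repeat (case: ifP => _ //=).

Lemma step_out_none E p c c' o : e_out E = false -> step E p c = Next c' o -> o = None.
Proof. move=> ho; rewrite /step ho; stepcase p c; by move=> h; inversion h. Qed.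

Lemma step_store_glob E p c c' o : e_store E = false -> step E p c = Next c' o -> glob c' = glob c.
Proof. move=> ho; rewrite /step ho; stepcase p c; by move=> h; inversion h. Qed.

Lemma step_halted E p c c' : step E p c = Halted c' -> c' = c.
Proof. rewrite /step; stepcase p c; by move=> h; inversion h. Qed.

Section Sim.
Variables (Es Et : env) (P p : program) (R off F : nat) (H : nat -> nat).
Hypothesis hcode : code_at P off (ccode R off F p).
Hypothesis hreg : forall k, k < size p -> ireg (nth IHalt p k) < R.
Hypothesis hW : e_W Es <= e_W Et.
Hypothesis hW0 : 0 < e_W Es.
Hypothesis hM : e_M Es <= e_M Et.
Hypothesis hst : e_store Et.
Hypothesis hargs : size (e_args Es) <= 3.
Hypothesis hinp : forall w, e_input Es = Some w -> w = nseq (nth 0 (e_args Es) 0) 3.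

Definition memrel (g : nat -> nat) (c2 : config) :=
  (forall x, x < e_M Es -> glob c2 x = g x) /\ (forall x, e_M Es <= x -> glob c2 x = H x).

Definition srel (c1 c2 : config) :=
  [/\ pc c2 = off + LL * minn (pc c1) (size p),
      (forall r, r < R -> regs c2 r = regs c1 r),
      (forall j, j < 3 -> regs c2 (R + j) = nth 0 (e_args Es) j),
      (forall r, regs c1 r < e_W Es) & memrel (glob c1) c2].

Definition EXIT := off + LL * size p.

Lemma sim_step c1 c2 : srel c1 c2 ->
  match step Es p c1 with
  | Next c1' None => reach Et P LL c2 (srel c1')
  | Next c1' (Some _) => reach Et P LL c2 (fun c2' => pc c2' = F /\ memrel (glob c1') c2')
  | Halted c' => reach Et P LL c2 (fun c2' => pc c2' = EXIT /\ memrel (glob c') c2')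
  | Stuck => True
  end.
Proof.
move=> [hpc hr ha hb hm].
case: (ltnP (pc c1) (size p)) => hk; last first.
  rewrite /step ltnNge hk /=; apply: reach0; split=> //.
  by rewrite hpc /EXIT (minn_idPr hk).
have hpc' : pc c2 = off + LL * pc c1 + 0 by rewrite hpc addn0 (minn_idPl (ltnW hk)).
have hcb := ccode_at hcode hk.
have hri := hreg hk.
have hWt : 0 < e_W Et by exact: leq_trans hW0 hW.
case: hm => hm1 hm2.
rewrite /step hk.
case E: (nth IHalt p (pc c1)) hri hcb => [r v|r j|r s t|r s t|r s t|r s t|r s|r s|r s|r l|l|r s|] /= hri hcb.
-
  case: ifP => hv //.
  apply: (reach_mono (k := 2)) => //.
  apply: rs_const; first by rewrite (code_fetch hcb (t := 0)).
    exact: leq_trans hv hW.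
  apply: rs_jmp; first by rewrite (code_fetch hcb (t := 1)) //= hpc'; lia.
  apply: reach0; split => //=.
  + by rewrite (minn_idPl hk).
  + by move=> r' hr'; rewrite /upd; case: eqP => // _; apply: hr.
  + by move=> j hj; rewrite /upd; case: eqP => [?|_]; [lia | apply: ha].
  + by move=> r'; rewrite /upd; case: eqP.
-
  case: ifP => hv //.
  case: (ltnP j 3) => hj; [rewrite /= hj in hcb | rewrite /= ltnNge hj /= in hcb].
  + apply: (reach_mono (k := 3)) => //.
    apply: rs_const; first by rewrite (code_fetch hcb (t := 0)).
      done.
    have e1 : upd (regs c2) r 0 (R + j) = nth 0 (e_args Es) j.
      by rewrite /upd; case: eqP => [?|_]; [lia | apply: ha].
    have e2 : upd (regs c2) r 0 r = 0 by rewrite /upd eqxx.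
    apply: rs_add; first by rewrite (code_fetch hcb (t := 1)) //= hpc'; lia.
      by rewrite /= e1 e2 addn0; exact: leq_trans hv hW.
    apply: rs_jmp; first by rewrite (code_fetch hcb (t := 2)) //= hpc'; lia.
    apply: reach0; split => //=.
    * by rewrite (minn_idPl hk).
    * move=> r' hr'; rewrite e1 e2 addn0 /upd; case: eqP => // _; by apply: hr.
    * by move=> j' hj'; rewrite /upd; case: eqP => [?|_]; [lia | apply: ha].
    * by move=> r'; rewrite /upd; case: eqP.
  + have hz : nth 0 (e_args Es) j = 0 by rewrite nth_default //; lia.
    apply: (reach_mono (k := 2)) => //.
    apply: rs_const; first by rewrite (code_fetch hcb (t := 0)).
      done.
    apply: rs_jmp; first by rewrite (code_fetch hcb (t := 1)) //= hpc'; lia.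
    apply: reach0; split => //=.
    * by rewrite (minn_idPl hk).
    * by move=> r' hr'; rewrite hz /upd; case: eqP => // _; apply: hr.
    * by move=> j' hj'; rewrite /upd; case: eqP => [?|_]; [lia | apply: ha].
    * by move=> r'; rewrite /upd; case: eqP.
-
  have hs : s < R by lia.
  have ht : t < R by lia.
  case: ifP => hv //.
  apply: (reach_mono (k := 2)) => //.
  apply: rs_add; first by rewrite (code_fetch hcb (t := 0)).
    by rewrite /= (hr s hs) (hr t ht); exact: leq_trans hv hW.
  rewrite /= (hr s hs) (hr t ht).
  apply: rs_jmp; first by rewrite (code_fetch hcb (t := 1)) //= hpc'; lia.
  finr hk hr ha hb.
-
  have hs : s < R by lia.
  have ht : t < R by lia.
  case: ifP => hv //.
  apply: (reach_mono (k := 2)) => //.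
  apply: rs_sub; first by rewrite (code_fetch hcb (t := 0)).
    by rewrite /= (hr s hs) (hr t ht); exact: leq_trans hv hW.
  rewrite /= (hr s hs) (hr t ht).
  apply: rs_jmp; first by rewrite (code_fetch hcb (t := 1)) //= hpc'; lia.
  finr hk hr ha hb.
-
  have hs : s < R by lia.
  have ht : t < R by lia.
  case: ifP => hv //.
  apply: (reach_mono (k := 2)) => //.
  apply: rs_mul; first by rewrite (code_fetch hcb (t := 0)).
    by rewrite /= (hr s hs) (hr t ht); exact: leq_trans hv hW.
  rewrite /= (hr s hs) (hr t ht).
  apply: rs_jmp; first by rewrite (code_fetch hcb (t := 1)) //= hpc'; lia.
  finr hk hr ha hb.
-
  have hs : s < R by lia.
  have ht : t < R by lia.
  case: ifP => hv //.
  apply: (reach_mono (k := 2)) => //.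
  apply: rs_div; first by rewrite (code_fetch hcb (t := 0)).
    by rewrite /= (hr s hs) (hr t ht); exact: leq_trans hv hW.
  rewrite /= (hr s hs) (hr t ht).
  apply: rs_jmp; first by rewrite (code_fetch hcb (t := 1)) //= hpc'; lia.
  finr hk hr ha hb.
-
  have hs : s < R by lia.
  case: ifP => hms //; case: ifP => hv //.
  apply: (reach_mono (k := 2)) => //.
  apply: rs_load; first by rewrite (code_fetch hcb (t := 0)).
      by rewrite /= (hr s hs); exact: leq_trans hms hM.
    by rewrite /= (hr s hs) (hm1 _ hms); exact: leq_trans hv hW.
  rewrite /= (hr s hs) (hm1 _ hms).
  apply: rs_jmp; first by rewrite (code_fetch hcb (t := 1)) //= hpc'; lia.
  finr hk hr ha hb.
-
  have hs : s < R by lia.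
  have hr0 : r < R by lia.
  case: ifP => // /andP[hse hms].
  apply: (reach_mono (k := 2)) => //.
  apply: rs_store; first by rewrite (code_fetch hcb (t := 0)).
      done.
    by rewrite /= (hr r hr0); exact: leq_trans hms hM.
  rewrite /= (hr s hs) (hr r hr0).
  apply: rs_jmp; first by rewrite (code_fetch hcb (t := 1)) //= hpc'; lia.
  apply: reach0; split => //=.
  + by rewrite (minn_idPl hk).
  + split=> x hx /=; rewrite /upd; case: eqP => // hxe.
    * exact: hm1.
    * lia.
    * exact: hm2.
-
  have hs : s < R by lia.
  have hr0 : r < R by lia.
  case E2: (e_input Es) => [w|] //.
  rewrite (hinp E2) size_nseq.
  set m := nth 0 (e_args Es) 0.
  have hA0 : regs c2 R = m by have := ha 0 isT; rewrite addn0.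
  have [hj0|hjp] := posnP (regs c1 s).
  + rewrite hj0 /= hW0.
    apply: (reach_mono (k := 3)) => //.
    apply: rs_jz; first by rewrite (code_fetch hcb (t := 0)).
    rewrite /= (hr s hs) hj0 /=.
    apply: rs_const; first by rewrite (code_fetch hcb (t := 4)).
      done.
    apply: rs_jmp; first by rewrite (code_fetch hcb (t := 5)) //= ; lia.
    finr hk hr ha hb.
  + have hjR : regs c2 s = regs c1 s by apply: hr.
    have hjW : regs c1 s - m < e_W Et.
      exact: leq_ltn_trans (leq_subr _ _) (leq_trans (hb s) hW).
    case: (leqP (regs c1 s) m) => hjm.
    * rewrite /= nth_nseq.
      have -> : ((regs c1 s).-1 < m) = true by apply/idP; lia.
      case: ifP => hv //.
      apply: (reach_mono (k := 5)) => //.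
      apply: rs_jz; first by rewrite (code_fetch hcb (t := 0)).
      rewrite /= hjR (negbTE (lt0n_neq0 hjp)).
      apply: rs_sub; first by rewrite (code_fetch hcb (t := 1)) //= hpc'; lia.
        by rewrite /= hjR hA0.
      rewrite /= hjR hA0.
      apply: rs_jz; first by rewrite (code_fetch hcb (t := 2)) //= hpc'; lia.
      rewrite /= updE1 (_ : (regs c1 s - m == 0) = true); last by apply/eqP; lia.
      apply: rs_const; first by rewrite (code_fetch hcb (t := 6)).
        exact: leq_trans hv hW.
      apply: rs_jmp; first by rewrite (code_fetch hcb (t := 7)) //=; lia.
      finr hk hr ha hb.
    * rewrite /= hW0.
      apply: (reach_mono (k := 7)) => //.
      apply: rs_jz; first by rewrite (code_fetch hcb (t := 0)).
      rewrite /= hjR (negbTE (lt0n_neq0 hjp)).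
      apply: rs_sub; first by rewrite (code_fetch hcb (t := 1)) //= hpc'; lia.
        by rewrite /= hjR hA0.
      rewrite /= hjR hA0.
      apply: rs_jz; first by rewrite (code_fetch hcb (t := 2)) //= hpc'; lia.
      rewrite /= updE1 (_ : (regs c1 s - m == 0) = false); last by apply/eqP; lia.
      apply: rs_jmp; first by rewrite (code_fetch hcb (t := 3)) //= hpc'; lia.
      apply: rs_const; first by rewrite (code_fetch hcb (t := 4)).
        done.
      apply: rs_jmp; first by rewrite (code_fetch hcb (t := 5)) //=; lia.
      finr hk hr ha hb.
-
  apply: (reach_mono (k := 2)) => //.
  apply: rs_jz; first by rewrite (code_fetch hcb (t := 0)).
  rewrite /= (hr r hri).
  case: eqP => hz.
  + by apply: reach0; split.
  + apply: rs_jmp; first by rewrite (code_fetch hcb (t := 1)) //= hpc'; lia.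
    finr hk hr ha hb.
-
  apply: (reach_mono (k := 1)) => //.
  apply: rs_jmp; first by rewrite (code_fetch hcb (t := 0)).
  by apply: reach0; split.
-
  case: ifP => // _.
  apply: (reach_mono (k := 1)) => //.
  apply: rs_jmp; first by rewrite (code_fetch hcb (t := 0)).
  by apply: reach0; split.
-
  apply: (reach_mono (k := 1)) => //.
  apply: rs_jmp; first by rewrite (code_fetch hcb (t := 0)).
  by apply: reach0; split.
Qed.

Lemma sim_run fuel c1 c2 cf : e_out Es = false -> srel c1 c2 -> run Es p fuel c1 = Some cf ->
  reach Et P (LL * fuel) c2 (fun c2' => pc c2' = EXIT /\ memrel (glob cf) c2').
Proof.
move=> ho; elim: fuel c1 c2 => [|f IH] c1 c2 hrel //=.
have := sim_step hrel.
case E: (step Es p c1) => [|c'|c' o] //.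
- move=> hr [<-]; apply: reach_mono hr; rewrite /LL; lia.
- rewrite (step_out_none ho E) => hr hrun.
  rewrite mulnS; apply: reach_trans; apply: reach_weak hr => c3 h3.
  exact: IH h3 hrun.
Qed.

Lemma sim_seg d c1 c2 r : e_store Es = false -> srel c1 c2 -> seg Es p d c1 = Some r ->
  reach Et P (LL * d) c2 (fun c2' => pc c2' = (if r is Some _ then F else EXIT) /\ memrel (glob c1) c2').
Proof.
move=> hs; elim: d c1 c2 => [|d IH] c1 c2 hrel //=.
have := sim_step hrel.
case E: (step Es p c1) => [|c'|c' [o|]] //.
- rewrite (step_halted E) => hr [<-]; apply: reach_mono hr; rewrite /LL; lia.
- rewrite (step_store_glob hs E) => hr [<-]; apply: reach_mono hr; rewrite /LL; lia.
- move=> hr hseg; rewrite -(step_store_glob hs E).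
  rewrite mulnS; apply: reach_trans; apply: reach_weak hr => c3 h3.
  exact: IH h3 hseg.
Qed.
End Sim.

Lemma bnd_exp n c B : (2 * n + 2) ^ c <= (n + 2) ^ (2 * c + B + 3) /\
  B * (2 * n + 1) + 2 * n + 4 < (n + 2) ^ (2 * c + B + 3).
Proof.
have h1 : (2 * n + 2) ^ c <= (n + 2) ^ (2 * c).
  rewrite expnM; elim: c => [|c IH] //.
  rewrite (expnS (2 * n + 2)) (expnS ((n + 2) ^ 2)); apply: leq_mul => //.
  rewrite expnS expn1; nia.
have h2 : B < (n + 2) ^ B.
  elim: B => [|b IHb]; first by rewrite expn0.
  rewrite expnS; nia.
have h0 : 0 < (n + 2) ^ (2 * c) by rewrite expn_gt0 addn2.
rewrite expnD [(n + 2) ^ (2 * c + B)]expnD.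
have -> : (n + 2) ^ 3 = (n + 2) * (n + 2) * (n + 2) by rewrite !expnS expn0 muln1 mulnA.
move: h1; set X := (n + 2) ^ (2 * c) in h0 *; set Y := (n + 2) ^ B in h2 *.
move=> h1.
have hV : B * (2 * n + 1) + 2 * n + 4 < B.+1 * ((n + 2) * (n + 2) * (n + 2)) by nia.
have hZ0 : 0 < (n + 2) * (n + 2) * (n + 2) by rewrite !muln_gt0; lia.
move: hV hZ0; set Z := (n + 2) * (n + 2) * (n + 2) => hV hZ0.
have hY : 0 < Y by lia.
split.
  apply: (leq_trans h1); rewrite -mulnA; apply: leq_pmulr; rewrite !muln_gt0; lia.
apply: (leq_trans hV); rewrite -mulnA; apply: (@leq_trans (Y * Z)).
  by apply: leq_mul.
exact: leq_pmull.
Qed.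

Lemma phase_run Es Et P p R a F c0 g K fuel cf :
  code_at P a (zcode R ++ ccode R (a + R) F p) ->
  (forall k, k < size p -> ireg (nth IHalt p k) < R) ->
  e_W Es <= e_W Et -> 0 < e_W Es -> e_M Es <= e_M Et -> e_store Et -> size (e_args Es) <= 3 ->
  (forall w, e_input Es = Some w -> w = nseq (nth 0 (e_args Es) 0) 3) ->
  reach Et P K c0 (fun c1 => [/\ pc c1 = a,
     (forall j, j < 3 -> regs c1 (R + j) = nth 0 (e_args Es) j) & glob c1 = glob c0]) ->
  (forall y, y < e_M Es -> glob c0 y = g y) ->
  e_out Es = false -> run Es p fuel (start g) = Some cf ->
  reach Et P (K + R + LL * fuel) c0
    (fun c' => pc c' = a + R + LL * size p /\ memrel Es (glob c0) (glob cf) c').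
Proof.
move=> hc hreg hW hW0 hM hst hargs hinp hset hg ho hrun.
apply: reach_trans; apply: reach_trans; apply: reach_weak hset => c1 [h1 h2 h3].
apply: reach_weak (zero_run (code_at_catl hc) h1 (leq_trans hW0 hW)) => c2 [z1 z2 z3 z4].
have hrel : srel Es p R (a + R) (glob c0) (start g) c2.
  split => //=.
  - by rewrite z1 min0n muln0 addn0.
  - by move=> j hj; rewrite z3 ?leq_addr // h2.
  - split=> x hx; rewrite z4 h3 //; exact: hg.
have hcc := code_at_catr hc; rewrite size_mkseq in hcc.
apply: reach_weak (sim_run hcc hreg hW hW0 hM hst hargs hinp ho hrel hrun) => c3 [e1 e2].
by split.
Qed.

Lemma phase_seg Es Et P p R a F c0 g K d r :
  code_at P a (zcode R ++ ccode R (a + R) F p) ->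
  (forall k, k < size p -> ireg (nth IHalt p k) < R) ->
  e_W Es <= e_W Et -> 0 < e_W Es -> e_M Es <= e_M Et -> e_store Et -> size (e_args Es) <= 3 ->
  (forall w, e_input Es = Some w -> w = nseq (nth 0 (e_args Es) 0) 3) ->
  reach Et P K c0 (fun c1 => [/\ pc c1 = a,
     (forall j, j < 3 -> regs c1 (R + j) = nth 0 (e_args Es) j) & glob c1 = glob c0]) ->
  (forall y, y < e_M Es -> glob c0 y = g y) ->
  e_store Es = false -> seg Es p d (start g) = Some r ->
  reach Et P (K + R + LL * d) c0
    (fun c' => pc c' = (if r is Some _ then F else a + R + LL * size p) /\ memrel Es (glob c0) g c').
Proof.
move=> hc hreg hW hW0 hM hst hargs hinp hset hg ho hseg.
apply: reach_trans; apply: reach_trans; apply: reach_weak hset => c1 [h1 h2 h3].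
apply: reach_weak (zero_run (code_at_catl hc) h1 (leq_trans hW0 hW)) => c2 [z1 z2 z3 z4].
have hrel : srel Es p R (a + R) (glob c0) (start g) c2.
  split => //=.
  - by rewrite z1 min0n muln0 addn0.
  - by move=> j hj; rewrite z3 ?leq_addr // h2.
  - split=> x hx; rewrite z4 h3 //; exact: hg.
have hcc := code_at_catr hc; rewrite size_mkseq in hcc.
apply: reach_weak (sim_seg hcc hreg hW hW0 hM hst hargs hinp ho hrel hseg) => c3 [e1 e2].
by split.
Qed.

Lemma reach_run E P K c (Q : config -> Prop) f :
  reach E P K c (fun c' => nth IHalt P (pc c') = IHalt /\ Q c') -> K < f ->
  exists cf, run E P f c = Some cf /\ Q cf.
Proof.
move=> [j [c' [h1 h2 [h3 h4]]]] hf; exists c'; split=> //.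
apply: run_of_steps h2 h3 _; lia.
Qed.

Definition rmax (ps : program) : nat := foldr (fun i m => maxn (ireg i).+1 m) 0 ps.
Lemma rmax_ok ps k : k < size ps -> ireg (nth IHalt ps k) < rmax ps.
Proof. elim: ps k => [|i ps IH] [|k] //= hk; [lia | have := IH k hk; lia]. Qed.

Section Main.
Variables (pre_p upd_p enm_p : program) (B c : nat).

Definition Rg := maxn (rmax pre_p) (maxn (rmax upd_p) (rmax enm_p)).

Lemma hreg_pre k : k < size pre_p -> ireg (nth IHalt pre_p k) < Rg.
Proof. move=> hk; have := rmax_ok hk; rewrite /Rg; lia. Qed.
Lemma hreg_upd k : k < size upd_p -> ireg (nth IHalt upd_p k) < Rg.
Proof. move=> hk; have := rmax_ok hk; rewrite /Rg; lia. Qed.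
Lemma hreg_enm k : k < size enm_p -> ireg (nth IHalt enm_p k) < Rg.
Proof. move=> hk; have := rmax_ok hk; rewrite /Rg; lia. Qed.

Definition SU d cx := [:: IArg (Rg + 3) 0; IAdd (Rg + 0) (Rg + 3) (Rg + 3); IArg (Rg + 4) 1;
  IAdd (Rg + 1) (Rg + 4) (Rg + 4); IConst (Rg + 3) d; ISub (Rg + 1) (Rg + 1) (Rg + 3);
  IConst (Rg + 2) cx].
Definition SE := [:: IArg (Rg + 3) 0; IAdd (Rg + 0) (Rg + 3) (Rg + 3); IConst (Rg + 1) 0;
  IConst (Rg + 2) 0].
Definition ADDR := [:: IArg (Rg + 3) 0; IAdd (Rg + 3) (Rg + 3) (Rg + 3); IConst (Rg + 4) 1;
  IAdd (Rg + 3) (Rg + 3) (Rg + 4); IConst (Rg + 4) B; IMul (Rg + 3) (Rg + 4) (Rg + 3);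
  IArg (Rg + 4) 1; IAdd (Rg + 3) (Rg + 3) (Rg + 4)].

Definition cc := 2 * c + B + 3.
Definition Et n i := u1env cc n i.

Lemma bndW n v : v <= B * (2 * n + 1) + 2 * n + 4 -> v < (n + 2) ^ cc.
Proof. move=> hv; have [_ h] := bnd_exp n c B; exact: leq_ltn_trans hv h. Qed.

Ltac fe hc hpc t := rewrite (code_fetch hc (t := t)) //= hpc; lia.
Ltac bw := apply: bndW => /=; unfold upd => /=; rewrite ?eqn_add2l /=; lia.

Lemma setupU_ok P a n i d cx c0 : code_at P a (SU d cx) -> pc c0 = a -> i <= n -> d <= 1 -> cx <= 3 ->
  reach (Et n i) P 7 c0 (fun c1 => [/\ pc c1 = a + 7,
    (forall j, j < 3 -> regs c1 (Rg + j) = nth 0 [:: 2 * n; 2 * i - d; cx] j) & glob c1 = glob c0]).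
Proof.
move=> hc hpc hi hd hcx.
apply: rs_arg; [fe hc hpc 0 | bw |].
apply: rs_add; [fe hc hpc 1 | bw |].
apply: rs_arg; [fe hc hpc 2 | bw |].
apply: rs_add; [fe hc hpc 3 | bw |].
apply: rs_const; [fe hc hpc 4 | bw |].
apply: rs_sub; [fe hc hpc 5 | bw |].
apply: rs_const; [fe hc hpc 6 | bw |].
apply: reach0; split => //=.
  by rewrite hpc; lia.
case=> [|[|[|j]]] // _ /=; rewrite /upd ?eqn_add2l /=; lia.
Qed.

Lemma setupE_ok P a n i c0 : code_at P a SE -> pc c0 = a ->
  reach (Et n i) P 4 c0 (fun c1 => [/\ pc c1 = a + 4,
    (forall j, j < 3 -> regs c1 (Rg + j) = nth 0 [:: 2 * n] j) & glob c1 = glob c0]).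
Proof.
move=> hc hpc.
apply: rs_arg; [fe hc hpc 0 | bw |].
apply: rs_add; [fe hc hpc 1 | bw |].
apply: rs_const; [fe hc hpc 2 | bw |].
apply: rs_const; [fe hc hpc 3 | bw |].
apply: reach0; split => //=.
  by rewrite hpc; lia.
case=> [|[|[|j]]] // _ /=; rewrite /upd ?eqn_add2l /=; lia.
Qed.

Lemma addr_ok P a n i c0 : code_at P a ADDR -> pc c0 = a -> i <= n ->
  reach (Et n i) P 8 c0 (fun c1 => [/\ pc c1 = a + 8,
    regs c1 (Rg + 3) = B * (2 * n + 1) + i & glob c1 = glob c0]).
Proof.
move=> hc hpc hi.
apply: rs_arg; [fe hc hpc 0 | bw |].
apply: rs_add; [fe hc hpc 1 | bw |].
apply: rs_const; [fe hc hpc 2 | bw |].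
apply: rs_add; [fe hc hpc 3 | bw |].
apply: rs_const; [fe hc hpc 4 | bw |].
apply: rs_mul; [fe hc hpc 5 | apply: bndW => /=; unfold upd => /=; rewrite ?eqn_add2l /=; nia |].
apply: rs_arg; [fe hc hpc 6 | bw |].
apply: rs_add; [fe hc hpc 7 | apply: bndW => /=; unfold upd => /=; rewrite ?eqn_add2l /=; nia |].
apply: reach0; split => //=.
  by rewrite hpc; lia.
rewrite /upd ?eqn_add2l /=; nia.
Qed.

Definition phU a d cx := SU d cx ++ zcode Rg ++ ccode Rg (a + 7 + Rg) 0 upd_p.
Definition phE a F := SE ++ zcode Rg ++ ccode Rg (a + 4 + Rg) F enm_p.
Definition phP := SE ++ zcode Rg ++ ccode Rg (0 + 4 + Rg) 0 pre_p.
Definition szU := 7 + Rg + LL * size upd_p.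

Lemma size_phU a d cx : size (phU a d cx) = szU.
Proof. by rewrite /phU !size_cat size_mkseq size_ccode /szU. Qed.

Lemma bndWc n : cellW c (2 * n) <= (n + 2) ^ cc.
Proof. by have [h _] := bnd_exp n c B. Qed.
Lemma bndM n : memM B (2 * n) <= (n + 2) ^ cc.
Proof. have [_ h] := bnd_exp n c B; rewrite /memM /cc; lia. Qed.
Lemma cellW_gt0 n : 0 < cellW c n.
Proof. by rewrite /cellW expn_gt0 addn2. Qed.

Lemma phU_ok P a n i d x g cf c0 : code_at P a (phU a d (code x)) -> pc c0 = a -> i <= n -> d <= 1 ->
  (forall y, y < B * (2 * n + 1) -> glob c0 y = g y) ->
  run (upd_env B c (2 * n) (2 * i - d) x) upd_p B (start g) = Some cf ->
  reach (Et n i) P (7 + Rg + LL * B) c0 (fun c' => pc c' = a + 7 + Rg + LL * size upd_p /\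
     memrel (upd_env B c (2 * n) (2 * i - d) x) (glob c0) (glob cf) c').
Proof.
move=> hc hpc hi hd hg hrun.
have hcs := code_at_catl hc.
have hcr := code_at_catr hc.
have e7 : size (SU d (code x)) = 7 by [].
rewrite e7 in hcr.
apply: (@phase_run (upd_env B c (2 * n) (2 * i - d) x) (Et n i) _ _ _ _ _ _ _ _ _ _ hcr hreg_upd (bndWc n) (cellW_gt0 _) (bndM n) _ _ _ _ hg _ hrun) => //.
have hx3 : code x <= 3 by case: x {hc hcs hcr hrun e7}.
by apply: reach_weak (setupU_ok hcs hpc hi hd hx3) => c1 h.
Qed.

Lemma phE_ok P a F n i g r c0 : code_at P a (phE a F) -> pc c0 = a ->
  (forall y, y < B * (2 * n + 1) -> glob c0 y = g y) ->
  seg (enum_env B c (2 * n)) enm_p B (start g) = Some r ->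
  reach (Et n i) P (4 + Rg + LL * B) c0 (fun c' =>
    pc c' = (if r is Some _ then F else a + 4 + Rg + LL * size enm_p) /\
    memrel (enum_env B c (2 * n)) (glob c0) g c').
Proof.
move=> hc hpc hg hseg.
have hcs := code_at_catl hc.
have hcr := code_at_catr hc.
have e4 : size SE = 4 by [].
rewrite e4 in hcr.
apply: (@phase_seg (enum_env B c (2 * n)) (Et n i) _ _ _ _ _ _ _ _ _ _ hcr hreg_enm (bndWc n) (cellW_gt0 _) (bndM n) _ _ _ _ hg _ hseg) => //.
exact: reach_weak (setupE_ok n i hcs hpc).
Qed.

Lemma phP_ok P n fuel cf : code_at P 0 phP ->
  run (pre_env B c (wS n (fun _ => false))) pre_p fuel (start zero_mem) = Some cf ->
  reach (Et n 0) P (4 + Rg + LL * fuel) (start zero_mem) (fun c' =>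
    pc c' = 0 + 4 + Rg + LL * size pre_p /\
    memrel (pre_env B c (wS n (fun _ => false))) zero_mem (glob cf) c').
Proof.
move=> hc hrun.
have hcs := code_at_catl hc.
have hcr := code_at_catr hc.
have e4 : size SE = 4 by [].
rewrite e4 in hcr.
have hsz := size_wS n (fun _ => false).
apply: (@phase_run (pre_env B c (wS n (fun _ => false))) (Et n 0) _ _ _ _ _ _ _ _ _ _ hcr hreg_pre _ (cellW_gt0 _) _ _ _ _ _ _ _ hrun) => //=.
- by rewrite hsz; exact: bndWc.
- by rewrite hsz; exact: bndM.
- by move=> w [<-]; rewrite hsz wS0 map_nseq.
- apply: reach_weak (@setupE_ok P 0 n 0 (start zero_mem) hcs erefl) => c1 [h1 h2 h3]; split => //.
  by move=> j hj; rewrite hsz h2.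
Qed.

Definition TR w g := forall us, all (fun u => (0 < u.1) && (u.1 <= size w)) us ->
  trace_ok L1 upd_p enm_p B c w g us.

Lemma TR_enum w g : TR w g -> enum_correct L1 enm_p B c w g.
Proof. by move=> h; case: (h [::] isT). Qed.

Lemma TR_upd w g i x : TR w g -> 0 < i <= size w ->
  exists cf, run (upd_env B c (size w) i x) upd_p B (start g) = Some cf /\
             TR (set_nth La w i.-1 x) (glob cf).
Proof.
move=> h hi.
case: (h [:: (i, x)]); first by rewrite /= hi.
move=> _ [cf [hr _]].
exists cf; split => // us hus.
have hsz : size (set_nth La w i.-1 x) = size w by rewrite size_set_nth; apply/maxn_idPr; lia.
case: (h ((i, x) :: us)); first by rewrite /= hi -hsz.
move=> _ [cf' [hr' htr]].
by move: hr'; rewrite hr => -[->].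
Qed.

Definition MM n := B * (2 * n + 1).

Definition Inv n (S : nat -> bool) (G : nat -> nat) := exists g,
  [/\ TR (wS n S) g, (forall y, y < MM n -> G y = g y) &
      (forall x, 0 < x <= n -> G (MM n + x) = S x)].

Lemma Inv_ext n S1 S2 G : S1 =1 S2 -> Inv n S1 G -> Inv n S2 G.
Proof.
move=> hS [g [h1 h2 h3]]; exists g; split => //.
- have -> : wS n S2 = wS n S1 by apply: eq_mkseq => k; rewrite hS.
  exact: h1.
- by move=> x hx; rewrite h3 // hS.
Qed.

Definition updP cx v := phU 0 0 cx ++ ADDR ++ [:: IConst (Rg + 4) v; IStore (Rg + 3) (Rg + 4); IHalt].
Definition BB := 64 + 4 * Rg + 32 * B.

Lemma updop_ok n S G i (b : bool) : Inv n S G -> 0 < i <= n ->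
  exists cf, run (Et n i) (updP (code (if b then Lb else Le)) b) BB (start G) = Some cf /\
             Inv n (fun y => if y == i then b else S y) (glob cf).
Proof.
move=> [g [htr hlow hhigh]] /andP[hi0 hin].
have hsz := size_wS n S.
have hpos : 0 < 2 * i <= size (wS n S) by rewrite hsz; lia.
have [cf1 [hrun1 htr1]] := TR_upd (if b then Lb else Le) htr hpos.
rewrite hsz -(subn0 (2 * i)) in hrun1.
rewrite wS_set in htr1; last by rewrite hi0 hin.
set P := updP _ _.
have hc : code_at P 0 P := @code_at_self P.
apply: (@reach_run _ _ ((7 + Rg + LL * B) + (8 + 2))); last by rewrite /BB /LL; lia.
apply: reach_trans.
apply: reach_weak (phU_ok (code_at_catl hc) (erefl : pc (start G) = 0) hin (leq0n 1) hlow hrun1)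
  => c1 [h1 [m1 m2]].
have hc2 := code_at_catr hc; rewrite size_phU in hc2.
apply: reach_trans.
apply: reach_weak (addr_ok (code_at_catl hc2) (_ : pc c1 = 0 + szU) hin) => [c2 [p2 r2 g2]|]; last first.
  by rewrite h1 /szU.
have hc3 := code_at_catr hc2; rewrite /= in hc3.
apply: rs_const; first by rewrite (code_fetch hc3 (t := 0)) //= p2 addn0.
  by apply: bndW; apply: leq_trans (leq_b1 b) _; lia.
apply: rs_store; first by rewrite (code_fetch hc3 (t := 1)) //= p2; lia.
  done.
  by rewrite /= /upd ?eqn_add2l /= r2; apply: bndW; lia.
apply: reach0; split.
  by rewrite (code_fetch hc3 (t := 2)) //= p2; lia.
exists (glob cf1); split => //.
- move=> y hy /=; rewrite /upd ?eqn_add2l /= r2.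
  case: eqP => [?|_]; first by rewrite /MM in hy; lia.
  by rewrite g2 m1.
- move=> x hx /=; rewrite /upd ?eqn_add2l /= r2.
  case: eqP => [e|ne].
    have -> : x = i by rewrite /MM in e; lia.
    by rewrite eqxx.
  have -> : (x == i) = false by apply/eqP => e; apply: ne; rewrite e.
  rewrite g2 m2 /=; last by rewrite /memM /MM; lia.
  exact: hhigh.
Qed.

Definition memP := ADDR ++ [:: ILoad 0 (Rg + 3); IHalt].

Lemma mem_ok n S G i : Inv n S G -> 0 < i <= n ->
  exists cf, run (Et n i) memP BB (start G) = Some cf /\ answer cf = S i /\ glob cf = G.
Proof.
move=> [g [htr hlow hhigh]] /andP[hi0 hin].
have hc : code_at memP 0 memP := @code_at_self memP.
apply: (@reach_run _ _ (8 + 1)); last by rewrite /BB; lia.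
apply: reach_trans.
apply: reach_weak (addr_ok (code_at_catl hc) (erefl : pc (start G) = 0) hin) => c2 [p2 r2 g2].
have hc3 := code_at_catr hc; rewrite /= in hc3.
have hG : glob c2 (regs c2 (Rg + 3)) = S i.
  by rewrite g2 r2 /=; rewrite /MM in hhigh; rewrite hhigh ?hi0.
apply: rs_load; first by rewrite (code_fetch hc3 (t := 0)) //= p2.
    by rewrite r2; apply: bndW; lia.
  by rewrite hG; apply: bndW; apply: leq_trans (leq_b1 _) _; lia.
apply: reach0; split.
  by rewrite (code_fetch hc3 (t := 1)) //= p2.
split => //.
by rewrite /answer /= updE1 hG; case: (S i).
Qed.

Definition a2 := szU.
Definition a3 := a2 + 4 + Rg + LL * size enm_p.
Definition aF := a3 + szU + 2.
Definition preP := phU 0 1 1 ++ phE a2 aF ++ (phU a3 1 3 ++ [:: IConst 0 1; IHalt]) ++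
  (phU aF 1 3 ++ [:: IConst 0 0; IHalt]).

Lemma pre_ok n S G i : Inv n S G -> 0 < i <= n ->
  exists cf, run (Et n i) preP BB (start G) = Some cf /\
    (answer cf <-> forall x, 1 <= x <= n -> S x -> i <= x) /\ Inv n S (glob cf).
Proof.
move=> [g [htr hlow hhigh]] hi; have /andP[hi0 hin] := hi.
have hsz := size_wS n S.
have hpos : 0 < 2 * i - 1 <= size (wS n S) by rewrite hsz; lia.
have [cf1 [hrun1 htr1]] := TR_upd La htr hpos.
rewrite hsz in hrun1; rewrite wS_a // in htr1.
have [k [outs [henum [huniq hiff]]]] := TR_enum htr1.
have hszA : size (wA n S i) = 2 * n by rewrite size_mkseq.
rewrite hszA in henum.
case: k henum => [|k] henum; rewrite /= in henum; first by [].
case Eseg: (seg (enum_env B c (2 * n)) enm_p B (start (glob cf1))) henum => [r|] // henum.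
have hposA : 0 < 2 * i - 1 <= size (wA n S i) by rewrite hszA; lia.
have [cf2 [hrun2 htr2]] := TR_upd Le htr1 hposA.
rewrite hszA in hrun2; rewrite wA_e // in htr2.
have hans : (r = None) <-> (forall x, 1 <= x <= n -> S x -> i <= x).
  have hA := wA_iff S hi.
  case: r Eseg henum => [[o c']|] Eseg henum; split => //.
  - move=> hall; case: (Defs.enum _ _ _ _ _) henum => // l [hl].
    have : o \in outs by rewrite -hl mem_head.
    case: o {hl Eseg} => p q /hiff [h1 [h2 [h3 h4]]].
    have [x [hx0 hxi hSx]] : exists x, [/\ 0 < x, x < i & S x].
      by apply/hA; exists p, q; split.
    have := hall x; rewrite hx0 hSx /=; lia.
  - move=> _ x /andP[hx1 hxn] hSx; rewrite leqNgt; apply/negP => hxi.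
    case: henum => hout; subst outs.
    have [p [q [h1 h2 h3 h4]]] : exists p q, [/\ 1 <= p, p <= q, q <= size (wA n S i) &
        L1 (Defs.infix (wA n S i) p q)] by apply/hA; exists x; split.
    have : (p, q) \in [::] by apply/hiff.
    by [].
set P := preP.
have hc : code_at P 0 P := @code_at_self P.
have hcU1 : code_at P 0 (phU 0 1 (code La)) := code_at_catl hc.
have hc' := code_at_catr hc; rewrite size_phU in hc'.
have hcE : code_at P a2 (phE a2 aF) := code_at_catl hc'.
have hc'' := code_at_catr hc'.
have eE : 0 + szU + size (phE a2 aF) = a3.
  rewrite /phE !size_cat size_mkseq size_ccode /a3 /a2 /=; lia.
rewrite eE in hc''.
have hcNF : code_at P a3 (phU a3 1 (code Le) ++ [:: IConst 0 1; IHalt]) := code_at_catl hc''.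
have hcF0 := code_at_catr hc''.
have eF : a3 + size (phU a3 1 (code Le) ++ [:: IConst 0 1; IHalt]) = aF.
  rewrite size_cat size_phU /aF /=; lia.
rewrite eF in hcF0.
have hcF : code_at P aF (phU aF 1 (code Le) ++ [:: IConst 0 0; IHalt]) := hcF0.
pose K1 := 7 + Rg + LL * B.
pose K2 := 4 + Rg + LL * B.
apply: (@reach_run _ _ (K1 + (K2 + (K1 + 1)))); last by rewrite /K1 /K2 /BB /LL; lia.
apply: reach_trans.
apply: reach_weak (phU_ok hcU1 (erefl : pc (start G) = 0) hin (leqnn 1) hlow hrun1)
  => c1 [h1 [m1 m2]].
apply: reach_trans.
have hg1 : forall y, y < B * (2 * n + 1) -> glob c1 y = glob cf1 y by move=> y hy; apply: m1.
apply: reach_weak (phE_ok i hcE (_ : pc c1 = a2) hg1 Eseg) => [c2 [h2 [n1 n2]]|]; last first.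
  by rewrite h1.
have hg2 : forall y, y < B * (2 * n + 1) -> glob c2 y = glob cf1 y by move=> y hy; apply: n1.
have hhigh2 : forall y, B * (2 * n + 1) <= y -> glob c2 y = G y.
  by move=> y hy; rewrite n2 // m2.
have common : forall a v (hcX : code_at P a (phU a 1 (code Le) ++ [:: IConst 0 v; IHalt])),
    pc c2 = a -> v <= 1 ->
    reach (Et n i) P (K1 + 1) c2 (fun c' => nth IHalt P (pc c') = IHalt /\
       regs c' 0 = v /\ Inv n S (glob c')).
  move=> a v hcX hpa hv.
  apply: reach_trans.
  apply: reach_weak (phU_ok (code_at_catl hcX) hpa hin (leqnn 1) hg2 hrun2) => c3 [h3 [q1 q2]].
  have hct := code_at_catr hcX; rewrite size_phU in hct.
  apply: rs_const; first by rewrite (code_fetch hct (t := 0)) //= h3 /szU; lia.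
    by apply: bndW; lia.
  apply: reach0; split.
    by rewrite (code_fetch hct (t := 1)) //= h3 /szU; lia.
  split; first by rewrite /= updE1.
  exists (glob cf2); split; first exact: htr2.
  - by move=> y hy /=; apply: q1.
  - move=> x hx /=; rewrite q2; last by rewrite /= /memM /MM; lia.
    rewrite hhigh2 /MM; last lia.
    exact: hhigh.
case: r h2 Eseg henum hans => [[o c']|] h2 Eseg henum hans.
- apply: reach_weak (common aF 0 hcF h2 isT) => c3 [q1 [q2 q3]]; split => //; split => //.
  rewrite /answer q2 /=; split => // hall.
  by have := proj2 hans hall.
- apply: reach_weak (common a3 1 hcNF h2 isT) => c3 [q1 [q2 q3]]; split => //; split => //.
  rewrite /answer q2 /=; split => // _.
  exact: (proj1 hans).
Qed.

Definition initP := phP ++ [:: IHalt].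

Lemma init_ok n :
  (forall w : seq letter, exists cf0,
        run (pre_env B c w) pre_p (B * (size w + 1)) (start zero_mem) = Some cf0 /\
        forall us : seq (nat * letter),
          all (fun u => (0 < u.1) && (u.1 <= size w)) us ->
          trace_ok L1 upd_p enm_p B c w (glob cf0) us) ->
  exists cf0, halts (u1env cc n 0) initP (start zero_mem) cf0 /\ Inv n (fun _ => false) (glob cf0).
Proof.
move=> HT.
have [cf [hrun htr]] := HT (wS n (fun _ => false)).
have hc : code_at initP 0 initP := @code_at_self initP.
have hcr := code_at_catr hc.
have eP : 0 + size phP = 0 + 4 + Rg + LL * size pre_p.
  by rewrite /phP !size_cat size_mkseq size_ccode /=; lia.
rewrite eP in hcr.
pose K := 4 + Rg + LL * (B * (size (wS n (fun _ => false)) + 1)).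
have hreach : reach (Et n 0) initP K (start zero_mem)
    (fun c' => nth IHalt initP (pc c') = IHalt /\ Inv n (fun _ => false) (glob c')).
  apply: reach_weak (phP_ok (code_at_catl hc) hrun) => c1 [h1 [m1 m2]]; split.
  - by rewrite (code_fetch hcr (t := 0)) //= h1 addn0.
  - exists (glob cf); split => //.
    + move=> y hy; apply: m1; rewrite /= size_wS /memM; exact: hy.
    + move=> x hx; rewrite m2 //= size_wS /memM /MM; lia.
have [cf0 [hr hq]] := reach_run hreach (ltnSn K).
by exists cf0; split => //; exists K.+1.
Qed.
End Main.

Definition DD pre_p upd_p enm_p B :=
  U1DS (initP pre_p upd_p enm_p) (memP pre_p upd_p enm_p B)
       (updP pre_p upd_p enm_p B 2 1) (updP pre_p upd_p enm_p B 3 0) (preP pre_p upd_p enm_p).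

Lemma trace_all pre_p upd_p enm_p B c n ops : forall S G,
  Inv upd_p enm_p B c n S G ->
  all (fun o => (1 <= u1arg o) && (u1arg o <= n)) ops ->
  u1_trace (DD pre_p upd_p enm_p B) (cc B c) (BB pre_p upd_p enm_p B) n S G ops.
Proof.
elim: ops => [|o ops IH] S G hinv //= /andP[ho hops].
case: o ho => i /= ho.
- have [cf [hr [ha hg]]] := mem_ok pre_p hinv ho.
  exists cf; split => //; split => //; rewrite hg; exact: IH.
- have [cf [hr hinv']] := updop_ok pre_p true hinv ho.
  have hext : (fun y => if y == i then true else S y) =1 (fun x => (x == i) || S x).
    by move=> y; case: (y == i).
  exists cf; split => //; apply: IH => //; exact: Inv_ext hext hinv'.
- have [cf [hr hinv']] := updop_ok pre_p false hinv ho.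
  have hext : (fun y => if y == i then false else S y) =1 (fun x => (x != i) && S x).
    by move=> y; case: (y == i).
  exists cf; split => //; apply: IH => //; exact: Inv_ext hext hinv'.
- have [cf [hr [ha hinv']]] := pre_ok pre_p hinv ho.
  exists cf; split => //; split => //; exact: IH.
Qed.

Theorem claim7p2 : prefixU1_hypothesis -> ~ tractable L1.
Proof.
move=> hU [pre_p [upd_p [enm_p [B [c HT]]]]]; apply: hU.
exists (DD pre_p upd_p enm_p B), (cc B c), (BB pre_p upd_p enm_p B) => n.
have [cf0 [hh hinv]] := init_ok n HT.
exists cf0; split => // ops hops.
exact: trace_all hinv hops.
Qed.
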